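(* For every $z\in\mathbb{C}$ with $|z|>1$, $$\sum_{n=0}^{\infty}\frac{(-1)^{m_n}}{p_n(z)}=1-\frac1z .$$
   Context: For $n\ge0$ and $z\in\mathbb{C}$, $p_n(z)=\frac12\sum_{i=0}^{n}\left(1-(-1)^{\binom{n}{i}}\right)z^i$, i.e. the sum of $z^i$ over those $i\in\{0,\dots,n\}$ with $\binom{n}{i}$ odd. $(m_n)_{n\ge0}=0,1,1,0,1,0,0,1,\dots$ is the Thue–Morse sequence: $m_n\equiv s(n)\pmod 2$, where $s(n)$ is the number of $1$'s in the binary expansion of $n$. *)

(* Defs.v *)
From Stdlib Require Import Reals Arith List.
Import ListNotations.
From Coquelicot Require Import Coquelicot.
Open Scope C_scope.

Fixpoint binom (n k : nat) : nat :=
  match n, k with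
  | _, O => 1%nat
  | O, S _ => 0%nat
  | S n', S k' => (binom n' k' + binom n' k)%nat
  end.

(* number of 1's in the binary expansion of n (fuel n suffices) *)
Fixpoint bitcount_aux (fuel n : nat) : nat :=
  match fuel with
  | O => 0%nat
  | S f => match n with
           | O => 0%nat
           | _ => (Nat.b2n (Nat.odd n) + bitcount_aux f (Nat.div2 n))%nat
           end
  end.
Definition bitcount (n : nat) : nat := bitcount_aux n n.

Definition thue_morse (n : nat) : nat := (bitcount n mod 2)%nat.

Definition tm_sign (n : nat) : C := if Nat.eqb (thue_morse n) 0 then RtoC 1 else RtoC (-1).

Definition p_poly (n : nat) (z : C) : C :=
  sum_n (fun i : nat => if Nat.odd (binom n i) then Cpow z i else RtoC 0) n.

Example tm_test : map thue_morse (seq 0 8) = [0;1;1;0;1;0;0;1]%nat%list. Proof. reflexivity. Qed.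
Example binom_test : binom 5 2 = 10%nat. Proof. reflexivity. Qed.

(* Main.v *)
Require Import Defs.
From Stdlib Require Import Reals Arith Lia Lra Btauto.
From Coquelicot Require Import Coquelicot.
Open Scope C_scope.

Lemma binom_gt : forall n k, (n < k)%nat -> binom n k = 0%nat.
Proof.
  induction n; intros k H; destruct k; simpl; try lia; auto.
  rewrite !IHn; lia.
Qed.

Lemma binom_n0 : forall n, binom n 0 = 1%nat.
Proof. destruct n; reflexivity. Qed.

Lemma odd_binom0 : forall j, Nat.odd (binom 0 j) = Nat.eqb j 0.
Proof. destruct j; reflexivity. Qed.

Definition Qp (a n : nat) := forall i, Nat.odd (binom (n + a) i) =
  xorb (Nat.odd (binom n i)) (Nat.leb a i && Nat.odd (binom n (i - a))).

Ltac natcases :=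
  repeat match goal with
  | |- context [Nat.eqb ?x ?y] => destruct (Nat.eqb_spec x y)
  | |- context [Nat.leb ?x ?y] => destruct (Nat.leb_spec x y)
  end; simpl; try reflexivity; try (exfalso; lia).

Lemma Qp_step : forall a n, (1 <= a)%nat -> Qp a n -> Qp a (S n).
Proof.
  intros a n Ha IH i. destruct i as [|j].
  - simpl. destruct (Nat.leb_spec a 0); [lia|]. reflexivity.
  - simpl (S n + a)%nat. cbn [binom]. rewrite !Nat.odd_add, !IH.
    destruct (Nat.leb_spec a (S j)).
    + destruct (Nat.eq_dec a (S j)).
      * subst a. rewrite Nat.sub_diag. destruct (Nat.leb_spec (S j) j); [lia|].
        rewrite binom_n0. simpl. btauto.
      * replace (S j - a)%nat with (S (j - a)) by lia.
        destruct (Nat.leb_spec a j); [|lia]. cbn [binom].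
        rewrite Nat.odd_add. replace (S (j - a)) with (S j - a)%nat by lia. btauto.
    + destruct (Nat.leb_spec a j); [lia|]. simpl. btauto.
Qed.

Definition Bp (a : nat) := forall j, Nat.odd (binom a j) = orb (Nat.eqb j 0) (Nat.eqb j a).

Lemma Bp_Qp0 : forall a, (1 <= a)%nat -> Bp a -> Qp a 0.
Proof.
  intros a Ha B i. simpl (0 + a)%nat. rewrite B, !odd_binom0. natcases.
Qed.

Lemma Qp_all : forall a n, (1 <= a)%nat -> Bp a -> Qp a n.
Proof.
  intros a n Ha B. induction n. apply Bp_Qp0; auto. apply Qp_step; auto.
Qed.

Lemma Bp_pow : forall K, Bp (2^K).
Proof.
  induction K.
  - intros [|[|i]]; reflexivity.
  - assert (Ha : (1 <= 2^K)%nat) by (apply Nat.le_succ_l, Nat.neq_0_lt_0, Nat.pow_nonzero; lia).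
    intros j. rewrite Nat.pow_succ_r' .
    replace (2 * 2^K)%nat with (2^K + 2^K)%nat by lia.
    rewrite (Qp_all _ _ Ha IHK j), !IHK.
    natcases.
Qed.

Lemma Qp_pow : forall K n, Qp (2^K) n.
Proof.
  intros. apply Qp_all. apply Nat.le_succ_l, Nat.neq_0_lt_0, Nat.pow_nonzero; lia.
  apply Bp_pow.
Qed.

Definition tt (n : nat) (z : C) (i : nat) : C := if Nat.odd (binom n i) then Cpow z i else RtoC 0.

Lemma sum_ext_zero : forall (f : nat -> C) m k,
  (forall i, (m < i)%nat -> f i = RtoC 0) -> sum_n f (m + k) = sum_n f m.
Proof.
  intros f m k H. induction k. rewrite Nat.add_0_r; auto.
  rewrite Nat.add_succ_r, sum_Sn, IHk, H by lia. change (Cplus (sum_n f m) (RtoC 0) = sum_n f m).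
  ring.
Qed.

Lemma sum_shift : forall (g : nat -> C) a m,
  sum_n (fun i => if Nat.leb a i then g (i - a)%nat else RtoC 0) (a + m) = sum_n g m.
Proof.
  intros g a m. induction m.
  - rewrite Nat.add_0_r. destruct a.
    + rewrite !sum_O. simpl. reflexivity.
    + rewrite sum_Sn, sum_O.
      assert (Hz : forall k, (k <= a)%nat -> sum_n (fun i => if Nat.leb (S a) i then g (i - S a)%nat else RtoC 0) k = RtoC 0).
      { induction k; intros Hk. rewrite sum_O. reflexivity.
        rewrite sum_Sn, IHk by lia. destruct (Nat.leb_spec (S a) (S k)); [lia|].
        change (Cplus (RtoC 0) (RtoC 0) = RtoC 0). ring. }
      rewrite Hz by lia. rewrite Nat.leb_refl, Nat.sub_diag. change (Cplus (RtoC 0) (g 0%nat) = g 0%nat). ring.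
  - rewrite Nat.add_succ_r, !sum_Sn, IHm. destruct (Nat.leb_spec a (S (a + m))); [|lia].
    f_equal. f_equal. lia.
Qed.

Lemma p_poly_0 : forall z, p_poly 0 z = 1.
Proof. intros. unfold p_poly. rewrite sum_O. reflexivity. Qed.

Lemma p_poly_split : forall K m z, (m < 2^K)%nat ->
  p_poly (m + 2^K) z = (1 + Cpow z (2^K)) * p_poly m z.
Proof.
  intros K m z Hm. set (a := (2^K)%nat) in *.
  unfold p_poly.
  transitivity (sum_n (fun i => plus (tt m z i) (if Nat.leb a i then Cpow z a * tt m z (i - a) else RtoC 0)) (m + a)).
  - apply sum_n_ext. intros i. unfold tt. pose proof (Qp_pow K m i) as Q; fold a in Q; rewrite Q.
    destruct (Nat.leb_spec a i).
    + rewrite (binom_gt m i) by lia. simpl.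
      destruct (Nat.odd (binom m (i - a))); simpl.
      * replace i with (a + (i - a))%nat at 1 by lia. rewrite Cpow_add_r.
        change (Cpow z a * Cpow z (i - a) = 0 + Cpow z a * Cpow z (i - a)). ring.
      * change (RtoC 0 = 0 + Cpow z a * 0). ring.
    + destruct (Nat.odd (binom m i)); simpl; unfold plus; simpl; ring.
  - rewrite sum_n_plus. fold (tt m z).
    rewrite (sum_ext_zero (tt m z) m a).
    2:{ intros i Hi. unfold tt. rewrite binom_gt by lia. reflexivity. }
    rewrite Nat.add_comm.
    pose proof (sum_shift (fun j => Cpow z a * tt m z j) a m) as S. cbv beta in S. rewrite S.
    pose proof (sum_n_mult_l (Cpow z a) (tt m z) m) as M.
    change (sum_n (fun k => Cpow z a * tt m z k) m = Cpow z a * sum_n (tt m z) m) in M.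
    rewrite M.
    change (sum_n (tt m z) m + Cpow z a * sum_n (tt m z) m = (1 + Cpow z a) * sum_n (tt m z) m).
    ring.
Qed.

Lemma bc_fuel : forall f g n, (n <= f)%nat -> (n <= g)%nat -> bitcount_aux f n = bitcount_aux g n.
Proof.
  induction f; intros g n Hf Hg.
  - assert (n = 0%nat) by lia. subst. destruct g; reflexivity.
  - destruct g. assert (n = 0%nat) by lia. subst. reflexivity.
    destruct n. reflexivity.
    change (Nat.b2n (Nat.odd (S n)) + bitcount_aux f (Nat.div2 (S n)) = Nat.b2n (Nat.odd (S n)) + bitcount_aux g (Nat.div2 (S n)))%nat. f_equal. apply IHf; apply Nat.div2_decr; lia.
Qed.

Lemma bc_eq : forall n, bitcount n = (Nat.b2n (Nat.odd n) + bitcount (Nat.div2 n))%nat.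
Proof.
  intros [|n]. reflexivity.
  unfold bitcount at 1.
  change (Nat.b2n (Nat.odd (S n)) + bitcount_aux n (Nat.div2 (S n)) = Nat.b2n (Nat.odd (S n)) + bitcount (Nat.div2 (S n)))%nat. f_equal. apply bc_fuel. apply Nat.div2_decr; lia. lia.
Qed.

Lemma bc_pow : forall K m, (m < 2^K)%nat -> bitcount (m + 2^K) = S (bitcount m).
Proof.
  induction K; intros m Hm.
  - simpl in Hm. assert (m = 0%nat) by lia. subst. reflexivity.
  - rewrite Nat.pow_succ_r'. rewrite (bc_eq (m + 2 * 2^K)), (bc_eq m).
    assert (Ho : Nat.odd (m + 2 * 2^K) = Nat.odd m).
    { rewrite Nat.odd_add, Nat.odd_mul. simpl. destruct (Nat.odd m); reflexivity. }
    assert (Hd : Nat.div2 (m + 2 * 2^K) = (Nat.div2 m + 2^K)%nat).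
    { rewrite !Nat.div2_div. rewrite Nat.mul_comm, Nat.div_add by lia. reflexivity. }
    rewrite Ho, Hd, IHK. lia.
    rewrite Nat.div2_div. apply Nat.Div0.div_lt_upper_bound. rewrite Nat.pow_succ_r' in Hm. lia.
Qed.

Lemma tm_sign_pow : forall K m, (m < 2^K)%nat -> tm_sign (m + 2^K) = - tm_sign m.
Proof.
  intros K m Hm. unfold tm_sign, thue_morse. rewrite bc_pow by auto.
  set (b := bitcount m).
  assert (H2 : (b mod 2 = 0 \/ b mod 2 = 1)%nat).
  { pose proof (Nat.mod_upper_bound b 2). lia. }
  destruct H2 as [H2|H2].
  - assert (H3 : (S b mod 2 = 1)%nat).
    { rewrite <- Nat.add_1_l, Nat.Div0.add_mod, H2. reflexivity. } rewrite H2, H3. simpl.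
    apply injective_projections; simpl; ring.
  - assert (H3 : (S b mod 2 = 0)%nat).
    { rewrite <- Nat.add_1_l, Nat.Div0.add_mod, H2. reflexivity. } rewrite H2, H3. simpl.
    apply injective_projections; simpl; ring.
Qed.

Lemma tm_sign_0 : tm_sign 0 = 1.
Proof. reflexivity. Qed.

Definition aa (z : C) (n : nat) : C := tm_sign n / p_poly n z.
Definition cK (z : C) (K : nat) : C := - / (1 + Cpow z (2^K)).
Fixpoint TT (z : C) (N : nat) : C := match N with O => RtoC 0 | S N' => TT z N' + aa z N' end.

Lemma Cmod_1p : forall x, (Cmod x - 1 <= Cmod (1 + x))%R.
Proof.
  intros x. pose proof (Cmod_triangle (1 + x) (- (1))) as H.
  rewrite Cmod_opp, Cmod_1 in H. replace (1 + x + - (1)) with x in H by ring. lra.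
Qed.

Lemma Cmod_m1 : forall x, (Cmod x - 1 <= Cmod (x - 1))%R.
Proof.
  intros x. pose proof (Cmod_triangle (x - 1) 1) as H.
  rewrite Cmod_1 in H. replace (x - 1 + 1) with x in H by ring. lra.
Qed.

Lemma pow2R_pos : forall K, (0 < 2 ^ K)%R.
Proof. intros; apply pow_lt; lra. Qed.

Lemma u_bound : forall z K, (1 < Cmod z)%R ->
  (2 ^ K * (Cmod z - 1) <= Cmod (Cpow z (2^K)) - 1)%R.
Proof.
  intros z K hz. rewrite Cmod_pow. induction K.
  - simpl. lra.
  - replace (2^(S K))%nat with (2^K*2)%nat by (simpl; lia). rewrite pow_mult. simpl (2 ^ S K)%R.
    set (y := (Cmod z ^ (2^K))%R) in *. simpl.
    pose proof (pow2R_pos K). pose proof (Rle_0_sqr (y-1)) as Hs; unfold Rsqr in Hs.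
    replace (y * (y * 1) - 1)%R with ((y-1)*(y-1) + 2 * (y - 1))%R by ring. lra.
Qed.

Lemma w_bounds : forall z K, (1 < Cmod z)%R ->
  (2 ^ K * (Cmod z - 1) <= Cmod (1 + Cpow z (2^K)))%R /\
  (2 ^ K * (Cmod z - 1) <= Cmod (Cpow z (2^K) - 1))%R.
Proof.
  intros z K hz. pose proof (u_bound z K hz). pose proof (Cmod_1p (Cpow z (2^K))).
  pose proof (Cmod_m1 (Cpow z (2^K))). split; lra.
Qed.

Lemma Cnz : forall x, (0 < Cmod x)%R -> x <> 0.
Proof. intros x H E. subst. rewrite Cmod_0 in H. lra. Qed.

Lemma onepw_nz : forall z K, (1 < Cmod z)%R -> 1 + Cpow z (2^K) <> 0.
Proof.
  intros. apply Cnz. destruct (w_bounds z K H). pose proof (pow2R_pos K).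
  assert (0 < 2 ^ K * (Cmod z - 1))%R by (apply Rmult_lt_0_compat; lra). lra.
Qed.

Lemma wm1_nz : forall z K, (1 < Cmod z)%R -> Cpow z (2^K) - 1 <> 0.
Proof.
  intros. apply Cnz. destruct (w_bounds z K H). pose proof (pow2R_pos K).
  assert (0 < 2 ^ K * (Cmod z - 1))%R by (apply Rmult_lt_0_compat; lra). lra.
Qed.

Lemma decomp : forall n, (1 <= n)%nat -> exists K m, n = (m + 2^K)%nat /\ (m < 2^K)%nat.
Proof.
  intros n Hn. destruct (Nat.log2_spec n) as [H1 H2]; [lia|].
  exists (Nat.log2 n), (n - 2 ^ Nat.log2 n)%nat. rewrite Nat.pow_succ_r' in H2. split; lia.
Qed.

Lemma p_nz : forall z n, (1 < Cmod z)%R -> p_poly n z <> 0.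
Proof.
  intros z n hz. induction n as [n IH] using (well_founded_induction lt_wf).
  destruct n as [|n'].
  - rewrite p_poly_0. apply Cnz. rewrite Cmod_1. lra.
  - destruct (decomp (S n')) as (K & m & E & Hm); [lia|]. rewrite E, p_poly_split by auto.
    apply Cmult_neq_0. apply onepw_nz; auto. apply IH.
    assert (1 <= 2^K)%nat by (apply Nat.le_succ_l, Nat.neq_0_lt_0, Nat.pow_nonzero; lia). lia.
Qed.

Lemma aa_split : forall z K m, (1 < Cmod z)%R -> (m < 2^K)%nat ->
  aa z (m + 2^K) = cK z K * aa z m.
Proof.
  intros z K m hz Hm. unfold aa, cK. rewrite p_poly_split, tm_sign_pow by auto.
  pose proof (p_nz z m hz). pose proof (onepw_nz z K hz). field. split; auto.
Qed.

Lemma TT_split : forall z K m, (1 < Cmod z)%R -> (m <= 2^K)%nat ->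
  TT z (2^K + m) = TT z (2^K) + cK z K * TT z m.
Proof.
  intros z K m hz. induction m; intros Hm.
  - rewrite Nat.add_0_r. simpl. ring.
  - rewrite Nat.add_succ_r. simpl. rewrite IHm by lia. rewrite Nat.add_comm, aa_split by (auto; lia). ring.
Qed.

Lemma TT_1 : forall z, TT z 1 = 1.
Proof.
  intros. simpl. unfold aa. rewrite p_poly_0, tm_sign_0. field.
Qed.

Lemma TT_pow : forall z K, (1 < Cmod z)%R ->
  TT z (2^K) = (1 - / z) * (Cpow z (2^K) / (Cpow z (2^K) - 1)).
Proof.
  intros z K hz. assert (z <> 0) by (apply Cnz; lra). induction K.
  - simpl (2^0)%nat. rewrite TT_1. pose proof (wm1_nz z 0 hz). simpl in H0.
    replace (z * 1) with z in * by ring. field. split; auto.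
  - rewrite Nat.pow_succ_r'. replace (2 * 2^K)%nat with (2^K + 2^K)%nat by lia.
    rewrite TT_split, IHK by (auto; lia). unfold cK.
    replace (Cpow z (2^K + 2^K)) with (Cpow z (2^K) * Cpow z (2^K)) by (rewrite Cpow_add_r; ring).
    pose proof (wm1_nz z K hz). pose proof (onepw_nz z K hz).
    assert (Cpow z (2^K) * Cpow z (2^K) - 1 <> 0).
    { replace (Cpow z (2^K) * Cpow z (2^K) - 1) with ((Cpow z (2^K) - 1) * (1 + Cpow z (2^K))) by ring.
      apply Cmult_neq_0; auto. }
    field. repeat split; auto.
Qed.

Lemma Cmod_sub : forall a b, (Cmod (a - b) <= Cmod a + Cmod b)%R.
Proof. intros. pose proof (Cmod_triangle a (- b)). rewrite Cmod_opp in H. exact H. Qed.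

Lemma cK_bound : forall z K, (1 < Cmod z)%R ->
  (Cmod (cK z K) <= / (Cmod z - 1) / 2 ^ K)%R.
Proof.
  intros z K hz. unfold cK. rewrite Cmod_opp, Cmod_inv by (apply onepw_nz; auto).
  destruct (w_bounds z K hz) as [H1 _]. pose proof (pow2R_pos K).
  assert (0 < 2 ^ K * (Cmod z - 1))%R by (apply Rmult_lt_0_compat; lra).
  replace (/ (Cmod z - 1) / 2 ^ K)%R with (/ (2 ^ K * (Cmod z - 1)))%R by (field; repeat split; lra).
  apply Rinv_le_contravar; auto.
Qed.

Fixpoint Qf (d : R) (K : nat) : R := match K with O => 1%R | S K' => (Qf d K' * (1 + d / 2 ^ K'))%R end.

Lemma Qf_nonneg : forall d K, (0 <= d)%R -> (0 <= Qf d K)%R.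
Proof.
  intros d K Hd. induction K; simpl. lra. pose proof (pow2R_pos K).
  apply Rmult_le_pos; auto. assert (0 <= d / 2^K)%R by (apply Rdiv_le_0_compat; lra). lra.
Qed.

Lemma Qf_exp : forall d K, (0 <= d)%R -> (Qf d K <= exp (2 * d - 2 * d / 2 ^ K))%R.
Proof.
  intros d K Hd. induction K; simpl.
  - replace (2 * d - 2 * d / 1)%R with 0%R by field. rewrite exp_0. lra.
  - pose proof (pow2R_pos K). pose proof (Qf_nonneg d K Hd).
    replace (2 * d - 2 * d / (2 * 2 ^ K))%R with ((2 * d - 2 * d / 2 ^ K) + d / 2 ^ K)%R by (field; repeat split; lra).
    rewrite exp_plus. pose proof (exp_ineq1_le (d / 2 ^ K)).
    assert (0 <= d / 2^K)%R by (apply Rdiv_le_0_compat; lra).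
    apply Rmult_le_compat; auto; lra.
Qed.

Lemma Qf_E : forall d K, (0 <= d)%R -> (Qf d K <= exp (2 * d))%R.
Proof.
  intros d K Hd. eapply Rle_trans. apply Qf_exp; auto.
  pose proof (pow2R_pos K). assert (0 <= 2 * d / 2^K)%R by (apply Rdiv_le_0_compat; lra).
  destruct (Req_dec (2 * d / 2 ^ K) 0) as [E|E].
  - rewrite E. right. f_equal. ring.
  - left. apply exp_increasing. lra.
Qed.

Lemma TT_bound : forall z K N, (1 < Cmod z)%R -> (N <= 2^K)%nat ->
  (Cmod (TT z N) <= Qf (/ (Cmod z - 1)) K)%R.
Proof.
  intros z K. set (d := (/ (Cmod z - 1))%R). induction K; intros N hz HN.
  - simpl in HN. simpl. destruct N as [|[|N]]; try lia.
    + simpl. rewrite Cmod_0. lra.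
    + rewrite TT_1, Cmod_1. lra.
  - assert (Hd : (0 < d)%R) by (unfold d; apply Rinv_0_lt_compat; lra).
    pose proof (pow2R_pos K). pose proof (Qf_nonneg d K (Rlt_le _ _ Hd)).
    assert (0 <= d / 2^K)%R by (apply Rdiv_le_0_compat; lra).
    destruct (Nat.le_gt_cases N (2^K)).
    + eapply Rle_trans. apply IHK; auto. simpl. nra.
    + rewrite Nat.pow_succ_r' in HN. replace N with (2^K + (N - 2^K))%nat by lia.
      rewrite TT_split by (auto; lia). simpl.
      eapply Rle_trans. apply Cmod_triangle. rewrite Cmod_mult.
      pose proof (IHK (2^K)%nat hz (le_n _)). pose proof (IHK (N - 2^K)%nat hz ltac:(lia)).
      pose proof (cK_bound z K hz). fold d in H5.
      pose proof (Cmod_ge_0 (cK z K)). pose proof (Cmod_ge_0 (TT z (N - 2^K))).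
      assert (Cmod (cK z K) * Cmod (TT z (N - 2 ^ K)) <= d / 2^K * Qf d K)%R.
      { apply Rmult_le_compat; auto. }
      nra.
Qed.

Lemma L_bound : forall z, (1 < Cmod z)%R -> (Cmod (1 - / z) <= 2)%R.
Proof.
  intros z hz. eapply Rle_trans. apply Cmod_sub. rewrite Cmod_1, Cmod_inv by (apply Cnz; lra).
  assert (/ Cmod z < / 1)%R by (apply Rinv_lt_contravar; lra). rewrite Rinv_1 in H. lra.
Qed.

Lemma err_bound : forall z K N, (1 < Cmod z)%R -> (2^K <= N <= 2^(S K))%nat ->
  (Cmod (TT z N - (1 - / z)) <=
     (2 * / (Cmod z - 1) + / (Cmod z - 1) * exp (2 * / (Cmod z - 1))) / 2 ^ K)%R.
Proof.
  intros z K N hz HN. set (d := (/ (Cmod z - 1))%R).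
  assert (Hd : (0 < d)%R) by (unfold d; apply Rinv_0_lt_compat; lra).
  pose proof (pow2R_pos K).
  rewrite Nat.pow_succ_r' in HN. replace N with (2^K + (N - 2^K))%nat by lia.
  rewrite TT_split by (auto; lia). rewrite TT_pow by auto.
  assert (Hz : z <> 0) by (apply Cnz; lra).
  pose proof (wm1_nz z K hz).
  replace ((1 - / z) * (Cpow z (2 ^ K) / (Cpow z (2 ^ K) - 1)) + cK z K * TT z (N - 2 ^ K) - (1 - / z))
    with ((1 - / z) / (Cpow z (2 ^ K) - 1) + cK z K * TT z (N - 2 ^ K)) by (field; split; auto).
  eapply Rle_trans. apply Cmod_triangle. rewrite Cmod_mult, Cmod_div by auto.
  destruct (w_bounds z K hz) as [_ H2].
  assert (0 < 2 ^ K * (Cmod z - 1))%R by (apply Rmult_lt_0_compat; lra).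
  assert (A1 : (Cmod (1 - / z) / Cmod (Cpow z (2 ^ K) - 1) <= 2 * d / 2 ^ K)%R).
  { replace (2 * d / 2 ^ K)%R with (2 * / (2 ^ K * (Cmod z - 1)))%R by (unfold d; field; split; lra).
    unfold Rdiv. apply Rmult_le_compat. apply Cmod_ge_0.
    left. apply Rinv_0_lt_compat. lra. apply L_bound; auto.
    apply Rinv_le_contravar; auto. }
  assert (A2 : (Cmod (cK z K) * Cmod (TT z (N - 2 ^ K)) <= d / 2 ^ K * exp (2 * d))%R).
  { apply Rmult_le_compat. apply Cmod_ge_0. apply Cmod_ge_0. apply cK_bound; auto.
    eapply Rle_trans. apply (TT_bound z K); auto; lia. apply Qf_E. lra. }
  replace ((2 * d + d * exp (2 * d)) / 2 ^ K)%R with (2 * d / 2 ^ K + d / 2 ^ K * exp (2 * d))%R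
    by (field; lra).
  lra.
Qed.

Lemma INR_pow2 : forall n, (INR n + 1 <= 2 ^ n)%R.
Proof.
  induction n. simpl. lra. rewrite S_INR. simpl. pose proof (pos_INR n). lra.
Qed.

Lemma sum_TT : forall z n, sum_n (fun k => tm_sign k / p_poly k z) n = TT z (S n).
Proof.
  intros z n. induction n.
  - rewrite sum_O. simpl. unfold aa. ring.
  - rewrite sum_Sn, IHn. simpl (TT z (S (S n))). unfold aa. reflexivity.
Qed.

Theorem mainTheorem15 (z : C) (hz : (1 < Cmod z)%R) :
  is_series (fun n : nat => tm_sign n / p_poly n z) (1 - / z).
Proof.
  unfold is_series. apply filterlim_locally. intros eps.
  set (d := (/ (Cmod z - 1))%R).
  set (Cst := (2 * d + d * exp (2 * d))%R).
  assert (Hd : (0 < d)%R) by (unfold d; apply Rinv_0_lt_compat; lra).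
  assert (HC : (0 < Cst)%R) by (unfold Cst; pose proof (exp_pos (2*d)); nra).
  destruct (INR_unbounded (Cst / eps)) as [K0 HK0].
  exists (2^K0)%nat. intros n Hn. apply norm_compat1.
  change (Cmod (sum_n (fun n : nat => tm_sign n / p_poly n z) n - (1 - / z))%C < eps)%R.
  rewrite sum_TT.
  destruct (Nat.log2_spec (S n)) as [H1 H2]; [lia|].
  set (K := Nat.log2 (S n)) in *.
  assert (HK : (K0 <= K)%nat).
  { unfold K. rewrite <- (Nat.log2_pow2 K0) at 1 by lia. apply Nat.log2_le_mono. lia. }
  eapply Rle_lt_trans. apply (err_bound z K (S n)); auto. lia.
  fold d. fold Cst.
  pose proof (Rle_pow 2 K0 K ltac:(lra) HK). pose proof (INR_pow2 K0).
  pose proof (pow2R_pos K0). pose proof (pow2R_pos K). pose proof (cond_pos eps).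
  assert (Cst < eps * 2 ^ K0)%R.
  { assert (Cst / eps < 2 ^ K0)%R by lra.
    apply (Rmult_lt_compat_l eps) in H6; auto.
    replace (eps * (Cst / eps))%R with Cst in H6 by (field; lra). lra. }
  apply (Rmult_lt_reg_r (2 ^ K)); auto. unfold Rdiv. rewrite Rmult_assoc, Rinv_l by lra.
nra.
Qed.
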